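(* Fix $\lambda\in\mathbb{R}^m$ and $\beta>0$, and let $\theta\mapsto\pi_\theta$ be a differentiable policy parameterization. Then $$\nabla_\theta\mathcal{L}^\beta(\pi_\theta,\lambda)=\sum_{s\in\mathcal{S}}\frac{d^{\pi_\theta}(s)}{1-\gamma}\sum_{a\in\mathcal{A}}Q^{\pi_\theta}_{\Gamma(\pi_\theta)}(s,a)\,\frac{\partial\pi_\theta(a\mid s)}{\partial\theta},$$ where $\Gamma(\pi)=r-\beta\sum_{i=1}^m c_i\min\{V^\pi_{c_i}(\rho)-b_i-\lambda_i/\beta,0\}$ and $Q^\pi_{\Gamma(\pi)}$ is the state-action value function for the (fixed) reward function $\Gamma(\pi)$.
   Context: CMDP: finite $\mathcal{S}$, $\mathcal{A}$; transition kernel $\mathcal{P}$; initial distribution $\rho$; discount $\gamma\in[0,1)$; reward $r:\mathcal{S}\times\mathcal{A}\to[0,1]$; constraint rewards $c_i:\mathcal{S}\times\mathcal{A}\to[0,1]$, thresholds $b_i\ge0$, $i\in[m]$. For bounded $u$, $Q^\pi_u(s,a)=\mathbb{E}[\sum_{\tau\ge0}\gamma^\tau u(s_\tau,a_\tau)\mid s_0=s,a_0=a]$ under $\mathcal{P}$ and $\pi$, $V^\pi_u(s)=\sum_a\pi(a\mid s)Q^\pi_u(s,a)$, $V^\pi_u(\rho)=\sum_s\rho(s)V^\pi_u(s)$. Discounted state visitation distribution: $d^\pi(s)=(1-\gamma)\sum_{s_0}\rho(s_0)\sum_{\tau\ge0}\gamma^\tau\Pr^\pi[s_\tau=s\mid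 s_0]$. Augmented Lagrangian: $\mathcal{L}^\beta(\pi,\lambda)=V^\pi_r(\rho)+\frac{\beta}{2}\sum_i\big(-\min\{V^\pi_{c_i}(\rho)-b_i-\lambda_i/\beta,0\}^2+\lambda_i^2/\beta^2\big)$. *)

(* Defs.v *)
From HB Require Import structures.
From mathcomp Require Import all_boot all_order all_algebra.
From mathcomp Require Import all_classical all_reals all_analysis.
Set Implicit Arguments. Unset Strict Implicit. Unset Printing Implicit Defensive.
Import Order.TTheory GRing.Theory Num.Theory.
Import numFieldNormedType.Exports.
Local Open Scope ring_scope.

(* Finite CMDP.  A policy is  pi : S -> A -> R  with  pi s a = pi(a|s);
   the transition kernel is  P : S -> A -> S -> R  with  P s a s' = P(s'|s,a). *)

Section CMDP.
Variables (R : realType) (S A : finType).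

Definition is_distr (T : finType) (p : T -> R) : Prop :=
  (forall x, 0 <= p x) /\ \sum_(x : T) p x = 1.

Definition is_policy (pi : S -> A -> R) : Prop := forall s, is_distr (pi s).

Definition is_kernel (P : S -> A -> S -> R) : Prop := forall s a, is_distr (P s a).

Definition rseries (F : nat -> R) : R := limn (series F).

Variables (P : S -> A -> S -> R) (gamma : R).

(* sa_prob pi s a t s' a' = Pr^pi[ s_t = s', a_t = a' | s_0 = s, a_0 = a ] *)
Fixpoint sa_prob (pi : S -> A -> R) (s : S) (a : A) (t : nat) : S -> A -> R :=
  match t with
  | 0 => fun s' a' => if (s' == s) && (a' == a) then 1 else 0
  | t.+1 => fun s' a' =>
      \sum_(s'' : S) \sum_(a'' : A) sa_prob pi s a t s'' a'' * P s'' a'' s' * pi s' a'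
  end.

(* st_prob pi s0 t s = Pr^pi[ s_t = s | s_0 = s0 ] *)
Fixpoint st_prob (pi : S -> A -> R) (s0 : S) (t : nat) : S -> R :=
  match t with
  | 0 => fun s => if s == s0 then 1 else 0
  | t.+1 => fun s =>
      \sum_(s' : S) \sum_(a : A) st_prob pi s0 t s' * pi s' a * P s' a s
  end.

Definition Qfun (pi : S -> A -> R) (u : S -> A -> R) (s : S) (a : A) : R :=
  rseries (fun t => gamma ^+ t *
     \sum_(s' : S) \sum_(a' : A) sa_prob pi s a t s' a' * u s' a').

Definition Vfun (pi : S -> A -> R) (u : S -> A -> R) (s : S) : R :=
  \sum_(a : A) pi s a * Qfun pi u s a.

Definition Vrho (rho : S -> R) (pi : S -> A -> R) (u : S -> A -> R) : R :=
  \sum_(s : S) rho s * Vfun pi u s.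

Definition dvisit (rho : S -> R) (pi : S -> A -> R) (s : S) : R :=
  (1 - gamma) * \sum_(s0 : S) rho s0 * rseries (fun t => gamma ^+ t * st_prob pi s0 t s).

Variables (m : nat) (rho : S -> R) (r : S -> A -> R)
  (c : 'I_m -> S -> A -> R) (b : 'I_m -> R).

Definition augLag (beta : R) (lam : 'I_m -> R) (pi : S -> A -> R) : R :=
  Vrho rho pi r + beta / 2 *
    \sum_(i < m) (- (Num.min (Vrho rho pi (c i) - b i - lam i / beta) 0) ^+ 2
                  + lam i ^+ 2 / beta ^+ 2).

Definition Gamma (beta : R) (lam : 'I_m -> R) (pi : S -> A -> R) : S -> A -> R :=
  fun s a => r s a - beta *
    \sum_(i < m) c i s a * Num.min (Vrho rho pi (c i) - b i - lam i / beta) 0.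

End CMDP.

(* Main.v *)
Require Import Defs.
From HB Require Import structures.
From mathcomp Require Import all_boot all_order all_algebra.
From mathcomp Require Import all_classical all_reals all_analysis.
From mathcomp.algebra_tactics Require Import ring lra.
Import Order.TTheory GRing.Theory Num.Theory.
Import numFieldNormedType.Exports.
Local Open Scope classical_set_scope.
Local Open Scope ring_scope.
Set Implicit Arguments. Unset Strict Implicit. Unset Printing Implicit Defensive.
Section Geo.
Variable R : realType.

Lemma cvg_sum_seq (J : Type) (r : seq J) (f : J -> nat -> R) (l : J -> R) :
  (forall j, f j @ \oo --> l j) ->
  (fun n => \sum_(j <- r) f j n) @ \oo --> \sum_(j <- r) l j.
Proof.
move=> fl; elim: r => [|x r IH].
  rewrite big_nil; under eq_fun do rewrite big_nil; exact: cvg_cst.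
rewrite big_cons; under eq_fun do rewrite big_cons.
exact: cvgD.
Qed.

Lemma cvg_geo (gamma : R) (e : nat -> R) (B : R) :
  0 <= gamma < 1 -> (forall t, `|e t| <= B) ->
  cvgn (series (fun t => gamma ^+ t * e t)).
Proof.
move=> /andP[g0 g1] eB; apply: normed_cvg.
have B0 : 0 <= B by apply: le_trans (eB 0%N).
apply: (@series_le_cvg _ _ (geometric B gamma)).
- by move=> n /=.
- by move=> n /=; rewrite mulr_ge0 // exprn_ge0.
- move=> n /=; rewrite normrM ger0_norm ?exprn_ge0 // mulrC.
  by rewrite ler_wpM2r // exprn_ge0.
- by apply: is_cvg_geometric_series; rewrite ger0_norm.
Qed.

Definition bnd (e : nat -> R) := exists B, forall t, `|e t| <= B.

Lemma G_shift (gamma : R) (e : nat -> R) :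
  0 <= gamma < 1 -> bnd e ->
  rseries (fun t => gamma ^+ t * e t) =
  e 0%N + gamma * rseries (fun t => gamma ^+ t * e t.+1).
Proof.
move=> hg [B eB].
have c1 := cvg_geo hg eB.
have c2 : cvgn (series (fun t => gamma ^+ t * e t.+1)) by apply: (cvg_geo hg (B:=B)).
rewrite /rseries.
have h : forall n, series (fun t => gamma ^+ t * e t) n.+1 =
   e 0%N + gamma * series (fun t => gamma ^+ t * e t.+1) n.
  move=> n; rewrite !seriesEord /= big_ord_recl /= expr0 mul1r mulr_sumr.
  by congr (_ + _); apply: eq_bigr => i _; rewrite /bump /= exprS mulrA.
have L1 : (fun n => series (fun t => gamma ^+ t * e t) n.+1) @ \oo -->
          limn (series (fun t => gamma ^+ t * e t)).
  by have := cvg_shiftS (series (fun t => gamma ^+ t * e t)) (nbhs (limn (series (fun t => gamma ^+ t * e t)))); move=> ->.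
have L2 : (fun n => series (fun t => gamma ^+ t * e t) n.+1) @ \oo -->
          e 0%N + gamma * limn (series (fun t => gamma ^+ t * e t.+1)).
  under eq_fun do rewrite h.
  by apply: cvgD; [exact: cvg_cst | exact: cvgMl_tmp].
exact: (cvg_unique _ L1 L2).
Qed.

Lemma cvg_sum_fin (J : finType) (f : J -> nat -> R) (l : J -> R) :
  (forall j, f j @ \oo --> l j) ->
  (fun n => \sum_(j : J) f j n) @ \oo --> \sum_(j : J) l j.
Proof.
move=> fl; have := @cvg_sum_seq J (enum J) f l fl.
rewrite [X in _ --> X]big_enum /=.
by under eq_fun do rewrite big_enum /=.
Qed.

Lemma G_sum (gamma : R) (I : finType) (k : I -> R) (f : I -> nat -> R) :
  0 <= gamma < 1 -> (forall i, bnd (f i)) ->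
  rseries (fun t => gamma ^+ t * \sum_(i : I) k i * f i t) =
  \sum_(i : I) k i * rseries (fun t => gamma ^+ t * f i t).
Proof.
move=> hg fb; rewrite /rseries; apply: cvg_lim => //.
have -> : series (fun t => gamma ^+ t * \sum_(i : I) k i * f i t) =
   (fun n => \sum_(i : I) k i * series (fun t => gamma ^+ t * f i t) n).
  apply/funext => n; rewrite seriesEord /=.
  under eq_bigr do rewrite mulr_sumr.
  rewrite exchange_big /=; apply: eq_bigr => i _.
  rewrite seriesEord /= mulr_sumr; apply: eq_bigr => j _; rewrite mulrCA.
  done.
apply: cvg_sum_fin => i.
apply: cvgMl_tmp.
have [B fB] := fb i.
exact: cvg_geo hg fB.
Qed.

End Geo.

Section Prob.
Variables (R : realType) (S A : finType) (P : S -> A -> S -> R).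
Hypothesis hP : is_kernel P.

Lemma sum_ind (T : finType) (y : T) (F : T -> R) :
  \sum_x (if x == y then F x else 0) = F y.
Proof. by rewrite -big_mkcond big_pred1_eq. Qed.
Lemma sum_ind' (T : finType) (y : T) (F : T -> R) :
  \sum_x (if y == x then F x else 0) = F y.
Proof. by under eq_bigr do rewrite eq_sym; rewrite sum_ind. Qed.
Lemma sum_ifb (T : finType) (b : bool) (F : T -> R) :
  \sum_x (if b then F x else 0) = if b then \sum_x F x else 0.
Proof. by case: b => //; rewrite big1. Qed.
Lemma swap4 (X Y Z W : finType) (f : X -> Y -> Z -> W -> R) :
  \sum_x \sum_y \sum_z \sum_w f x y z w = \sum_z \sum_w \sum_x \sum_y f x y z w.
Proof.
under eq_bigr do rewrite exchange_big.
rewrite exchange_big; apply: eq_bigr => z _.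
under eq_bigr do rewrite exchange_big.
by rewrite exchange_big.
Qed.
Lemma if_and (b1 b2 : bool) (x : R) :
  (if b1 && b2 then x else 0) = if b1 then (if b2 then x else 0) else 0.
Proof. by case: b1. Qed.
Lemma if_mull (b : bool) (x y : R) : (if b then x else 0) * y = if b then x * y else 0.
Proof. by case: b; rewrite ?mul0r. Qed.
Lemma if_mulr (b : bool) (x y : R) : y * (if b then x else 0) = if b then y * x else 0.
Proof. by case: b; rewrite ?mulr0. Qed.

Section Pol.
Variable pi : S -> A -> R.
Hypothesis hpi : is_policy pi.

Lemma P_ge0 s a s' : 0 <= P s a s'. Proof. by case: (hP s a). Qed.
Lemma P_sum s a : \sum_s' P s a s' = 1. Proof. by case: (hP s a). Qed.
Lemma pi_ge0 s a : 0 <= pi s a. Proof. by case: (hpi s). Qed.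
Lemma pi_sum s : \sum_a pi s a = 1. Proof. by case: (hpi s). Qed.

Lemma sa_ge0 s a t s' a' : 0 <= sa_prob P pi s a t s' a'.
Proof.
elim: t s' a' => [|t IH] s' a' /=; first by case: ifP.
apply: sumr_ge0 => s'' _; apply: sumr_ge0 => a'' _.
by rewrite !mulr_ge0 ?P_ge0 ?pi_ge0.
Qed.

Lemma sa_sum s a t : \sum_s' \sum_a' sa_prob P pi s a t s' a' = 1.
Proof.
elim: t => [|t IH] /=.
  under eq_bigr do under eq_bigr do rewrite if_and.
  under eq_bigr do rewrite sum_ifb.
  by rewrite sum_ind sum_ind.
rewrite -IH.
transitivity (\sum_s' \sum_s'' \sum_a'' \sum_a' sa_prob P pi s a t s'' a'' * P s'' a'' s' * pi s' a').
  apply: eq_bigr => s' _; rewrite exchange_big /=; apply: eq_bigr => s'' _.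
  by rewrite exchange_big.
rewrite exchange_big /=; apply: eq_bigr => s'' _.
rewrite exchange_big /=; apply: eq_bigr => a'' _.
transitivity (\sum_s' sa_prob P pi s a t s'' a'' * P s'' a'' s' * \sum_a' pi s' a').
  by apply: eq_bigr => s' _; rewrite mulr_sumr.
under eq_bigr do rewrite pi_sum mulr1.
by rewrite -mulr_sumr P_sum mulr1.
Qed.

Lemma sa_back t s a s2 a2 :
  sa_prob P pi s a t.+1 s2 a2 =
  \sum_s1 \sum_a1 P s a s1 * pi s1 a1 * sa_prob P pi s1 a1 t s2 a2.
Proof.
elim: t s a s2 a2 => [|t IH] s a s2 a2.
  rewrite [LHS]/=.
  under eq_bigr do under eq_bigr do rewrite if_and !if_mull.
  under eq_bigr do rewrite sum_ifb.
  rewrite sum_ind sum_ind !mul1r.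
  under eq_bigr do under eq_bigr do rewrite [sa_prob _ _ _ _ 0 _ _]/= if_and !if_mulr mulr1.
  under eq_bigr do rewrite sum_ifb.
  by rewrite sum_ind' sum_ind'.
rewrite [LHS](_ : _ = \sum_s'' \sum_a'' sa_prob P pi s a t.+1 s'' a'' * P s'' a'' s2 * pi s2 a2) //.
under eq_bigr do under eq_bigr do rewrite IH.
transitivity (\sum_s'' \sum_a'' \sum_s1 \sum_a1
   P s a s1 * pi s1 a1 * (sa_prob P pi s1 a1 t s'' a'' * P s'' a'' s2 * pi s2 a2)).
  apply: eq_bigr => s'' _; apply: eq_bigr => a'' _.
  rewrite !mulr_suml; apply: eq_bigr => s1 _; rewrite !mulr_suml.
  by apply: eq_bigr => a1 _; rewrite !mulrA.
rewrite [RHS]/= swap4.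
apply: eq_bigr => s1 _; apply: eq_bigr => a1 _.
rewrite mulr_sumr; apply: eq_bigr => s'' _.
by rewrite mulr_sumr.
Qed.

Lemma st_ge0 s0 t s : 0 <= st_prob P pi s0 t s.
Proof.
elim: t s => [|t IH] s /=; first by case: ifP.
apply: sumr_ge0 => s' _; apply: sumr_ge0 => a _.
by rewrite !mulr_ge0 ?P_ge0 ?pi_ge0.
Qed.

Lemma st_sum s0 t : \sum_s st_prob P pi s0 t s = 1.
Proof.
elim: t => [|t IH] /=; first by rewrite sum_ind.
rewrite -IH exchange_big /=; apply: eq_bigr => s' _.
rewrite exchange_big /=.
transitivity (\sum_a st_prob P pi s0 t s' * pi s' a * \sum_s P s' a s).
  by apply: eq_bigr => a _; rewrite mulr_sumr.
under eq_bigr do rewrite P_sum mulr1.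
by rewrite -mulr_sumr pi_sum mulr1.
Qed.

Lemma st_le1 s0 t s : st_prob P pi s0 t s <= 1.
Proof.
rewrite -(st_sum s0 t) (bigD1 s) //= lerDl.
by apply: sumr_ge0 => i _; apply: st_ge0.
Qed.

Lemma st_back t s0 s :
  st_prob P pi s0 t.+1 s =
  \sum_s1 (\sum_a pi s0 a * P s0 a s1) * st_prob P pi s1 t s.
Proof.
elim: t s0 s => [|t IH] s0 s.
  rewrite [LHS]/=.
  under eq_bigr do under eq_bigr do rewrite !if_mull mul1r.
  under eq_bigr do rewrite sum_ifb.
  rewrite sum_ind.
  rewrite [RHS](_ : _ = \sum_s1 (\sum_a pi s0 a * P s0 a s1) * (if s == s1 then 1 else 0)) //.
  under [RHS]eq_bigr do rewrite if_mulr mulr1.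
  by rewrite sum_ind'.
rewrite [LHS](_ : _ = \sum_s' \sum_a st_prob P pi s0 t.+1 s' * pi s' a * P s' a s) //.
under eq_bigr do under eq_bigr do rewrite IH.
transitivity (\sum_s' \sum_a \sum_s1
   (\sum_a0 pi s0 a0 * P s0 a0 s1) * (st_prob P pi s1 t s' * pi s' a * P s' a s)).
  apply: eq_bigr => s' _; apply: eq_bigr => a _.
  rewrite -mulrA mulr_suml; apply: eq_bigr => s1 _.
  by rewrite !mulrA.
under eq_bigr do rewrite exchange_big.
rewrite exchange_big; apply: eq_bigr => s1 _.
rewrite [in RHS]/= mulr_sumr; apply: eq_bigr => s' _.
by rewrite mulr_sumr.
Qed.

End Pol.
End Prob.

Section Bell.
Variables (R : realType) (S A : finType) (P : S -> A -> S -> R) (gamma : R).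
Hypothesis hP : is_kernel P.
Hypothesis hg : 0 <= gamma < 1.

Lemma bnd_seq (I : eqType) (r : seq I) (k : I -> R) (f : I -> nat -> R) :
  (forall i, bnd (f i)) -> bnd (fun t => \sum_(i <- r) k i * f i t).
Proof.
move=> fb; elim: r => [|x r [B IH]].
  by exists 0 => t; rewrite big_nil normr0.
have [Bx hx] := fb x.
exists (`|k x| * Bx + B) => t; rewrite big_cons.
apply: le_trans (ler_normD _ _) _; apply: lerD => //.
by rewrite normrM ler_wpM2l.
Qed.

Lemma bnd_fin (I : finType) (k : I -> R) (f : I -> nat -> R) :
  (forall i, bnd (f i)) -> bnd (fun t => \sum_(i : I) k i * f i t).
Proof. exact: bnd_seq. Qed.

Lemma abs_le_sum2 (u : S -> A -> R) s a : `|u s a| <= \sum_s' \sum_a' `|u s' a'|.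
Proof.
rewrite (bigD1 s) //= (bigD1 a) //= -addrA lerDl.
by apply: addr_ge0; apply: sumr_ge0 => i _ //; apply: sumr_ge0.
Qed.

Section Pol.
Variable pi : S -> A -> R.
Hypothesis hpi : is_policy pi.

Definition eQ (u : S -> A -> R) s a t :=
  \sum_s' \sum_a' sa_prob P pi s a t s' a' * u s' a'.

Lemma bnd_eQ u s a : bnd (eQ u s a).
Proof.
exists (\sum_s' \sum_a' `|u s' a'|) => t.
rewrite /eQ; set B := (\sum_s' \sum_a' `|u s' a'|).
apply: le_trans (ler_norm_sum _ _ _) _.
apply: (@le_trans _ _ (\sum_s' \sum_a' sa_prob P pi s a t s' a' * B)).
  apply: ler_sum => s' _; apply: le_trans (ler_norm_sum _ _ _) _.
  apply: ler_sum => a' _; rewrite normrM ger0_norm ?sa_ge0 //.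
  by rewrite ler_wpM2l ?sa_ge0 // abs_le_sum2.
under eq_bigr do rewrite -mulr_suml.
by rewrite -mulr_suml sa_sum ?mul1r.
Qed.

Lemma eQ0 u s a : eQ u s a 0 = u s a.
Proof.
rewrite /eQ /=.
under eq_bigr do under eq_bigr do rewrite if_and !if_mull mul1r.
under eq_bigr do rewrite sum_ifb.
by rewrite sum_ind sum_ind.
Qed.

Lemma eQS u s a t :
  eQ u s a t.+1 = \sum_s1 P s a s1 * \sum_a1 pi s1 a1 * eQ u s1 a1 t.
Proof.
rewrite /eQ.
under eq_bigr do under eq_bigr do rewrite sa_back // mulr_suml.
under eq_bigr do under eq_bigr do under eq_bigr do rewrite mulr_suml.
rewrite swap4; apply: eq_bigr => s1 _.
rewrite mulr_sumr; apply: eq_bigr => a1 _.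
rewrite mulr_sumr mulr_sumr; apply: eq_bigr => s' _.
rewrite mulr_sumr mulr_sumr; apply: eq_bigr => a' _.
by rewrite !mulrA.
Qed.

Lemma Qfun_eQ u s a :
  Qfun P gamma pi u s a = rseries (fun t => gamma ^+ t * eQ u s a t).
Proof. by []. Qed.

Lemma Q_bellman u s a :
  Qfun P gamma pi u s a = u s a + gamma * \sum_s1 P s a s1 * Vfun P gamma pi u s1.
Proof.
rewrite Qfun_eQ G_shift //; last exact: bnd_eQ.
rewrite eQ0; congr (_ + _ * _).
under eq_fun do rewrite eQS.
rewrite G_sum //; last first.
  by move=> s1; apply: bnd_fin => a1; apply: bnd_eQ.
apply: eq_bigr => s1 _; congr (_ * _).
by rewrite G_sum //; move=> a1; apply: bnd_eQ.
Qed.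

Lemma V_bellman u s :
  Vfun P gamma pi u s =
  \sum_a pi s a * (u s a + gamma * \sum_s1 P s a s1 * Vfun P gamma pi u s1).
Proof. by rewrite /Vfun; apply: eq_bigr => a _; rewrite Q_bellman. Qed.

Lemma bell_uniq0 (z : S -> R) :
  (forall s, z s = gamma * \sum_a pi s a * \sum_s1 P s a s1 * z s1) ->
  forall s, z s = 0.
Proof.
move=> hz.
set m := \big[Num.max/0]_s `|z s|.
have m0 : 0 <= m.
  rewrite /m; elim/big_ind: _ => //= x y hx hy.
  by rewrite le_max hx.
have zm : forall s, `|z s| <= m by move=> s; rewrite /m; apply: le_bigmax.
case/andP: hg => g0 g1.
have zgm : forall s, `|z s| <= gamma * m.
  move=> s; rewrite hz normrM ger0_norm //; apply: ler_wpM2l => //.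
  apply: le_trans (ler_norm_sum _ _ _) _.
  apply: (@le_trans _ _ (\sum_a pi s a * m)).
    apply: ler_sum => a _; rewrite normrM ger0_norm ?pi_ge0 //.
    apply: ler_wpM2l; first by apply: pi_ge0.
    apply: le_trans (ler_norm_sum _ _ _) _.
    apply: (@le_trans _ _ (\sum_s1 P s a s1 * m)).
      apply: ler_sum => s1 _; rewrite normrM ger0_norm ?P_ge0 //.
      by apply: ler_wpM2l; [apply: P_ge0|apply: zm].
    by rewrite -mulr_suml P_sum // mul1r.
  by rewrite -mulr_suml pi_sum // mul1r.
have mle : m <= gamma * m.
  by rewrite /m; apply: bigmax_le => //; rewrite mulr_ge0.
have m00 : m <= 0.
  have : (1 - gamma) * m <= 0 by rewrite mulrBl mul1r subr_le0.
  by rewrite pmulr_rle0 // subr_gt0.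
move=> s; apply/eqP; rewrite -normr_le0; apply: le_trans (zm s) m00.
Qed.

Lemma bell_uniq (g : S -> R) (z1 z2 : S -> R) :
  (forall s, z1 s = g s + gamma * \sum_a pi s a * \sum_s1 P s a s1 * z1 s1) ->
  (forall s, z2 s = g s + gamma * \sum_a pi s a * \sum_s1 P s a s1 * z2 s1) ->
  forall s, z1 s = z2 s.
Proof.
move=> h1 h2 s; apply/eqP; rewrite -subr_eq0; apply/eqP.
apply: (bell_uniq0 (z := fun s => z1 s - z2 s)) => s'.
rewrite h1 h2 opprD addrACA subrr add0r -mulrBr; congr (_ * _).
rewrite -sumrB; apply: eq_bigr => a _; rewrite -mulrBr; congr (_ * _).
by rewrite -sumrB; apply: eq_bigr => s1 _; rewrite mulrBr.
Qed.

Lemma V_bellman' u s :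
  Vfun P gamma pi u s = (\sum_a pi s a * u s a) +
    gamma * \sum_a pi s a * \sum_s1 P s a s1 * Vfun P gamma pi u s1.
Proof.
rewrite V_bellman mulr_sumr -big_split /=; apply: eq_bigr => a _.
by rewrite mulrDr mulrCA.
Qed.

Definition Lv s0 s := rseries (fun t => gamma ^+ t * st_prob P pi s0 t s).

Lemma bnd_st s0 s : bnd (fun t => st_prob P pi s0 t s).
Proof.
exists 1 => t; rewrite ger0_norm ?st_ge0 //; exact: st_le1.
Qed.

Lemma Lv_bellman s0 s :
  Lv s0 s = (if s == s0 then 1 else 0) +
     gamma * \sum_s1 (\sum_a pi s0 a * P s0 a s1) * Lv s1 s.
Proof.
rewrite /Lv G_shift //; last exact: bnd_st.
congr (_ + _ * _).
under eq_fun do rewrite st_back //.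
rewrite G_sum //.
by move=> s1; apply: bnd_st.
Qed.

End Pol.
End Bell.

Section DiffAlg.
Variables (R : realType) (d : nat).
Local Notation V := 'rV[R]_d.

Lemma diff_sum_seq (I : Type) (r : seq I) (f : I -> V -> R) (x : V) :
  (forall i, differentiable (f i) x) ->
  differentiable (fun y => \sum_(i <- r) f i y) x.
Proof.
move=> hf; elim: r => [|i r IH].
  under eq_fun do rewrite big_nil.
  exact: differentiable_cst.
under eq_fun do rewrite big_cons.
exact: (differentiableD (hf i) IH).
Qed.

Lemma diff_prod_seq (I : Type) (r : seq I) (f : I -> V -> R) (x : V) :
  (forall i, differentiable (f i) x) ->
  differentiable (fun y => \prod_(i <- r) f i y) x.
Proof.
move=> hf; elim: r => [|i r IH].
  under eq_fun do rewrite big_nil.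
  exact: differentiable_cst.
under eq_fun do rewrite big_cons.
exact: (differentiableM (hf i) IH).
Qed.

Lemma diff_cstM (c : R) (f : V -> R) x :
  differentiable f x -> differentiable (fun y => c * f y) x.
Proof. by move=> hf; apply: (differentiableM (differentiable_cst c x) hf). Qed.

Lemma diff_det k (F : V -> 'M[R]_k) x :
  (forall i j, differentiable (fun y => F y i j) x) ->
  differentiable (fun y => \det (F y)) x.
Proof.
move=> hF; rewrite /determinant.
apply: diff_sum_seq => s; apply: diff_cstM.
by apply: diff_prod_seq => i; apply: hF.
Qed.

Lemma diff_cofactor k (F : V -> 'M[R]_k) x i j :
  (forall i j, differentiable (fun y => F y i j) x) ->
  differentiable (fun y => cofactor (F y) i j) x.
Proof.
move=> hF; rewrite /cofactor; apply: diff_cstM; apply: diff_det => a b.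
under eq_fun do rewrite !mxE.
exact: hF.
Qed.

End DiffAlg.

Section Cramer.
Variables (R : realType) (S A : finType) (P : S -> A -> S -> R) (gamma : R).
Hypothesis hP : is_kernel P.
Hypothesis hg : 0 <= gamma < 1.
Variable d : nat.
Variable pi : 'rV[R]_d -> S -> A -> R.
Hypothesis hpi : forall th, is_policy (pi th).
Hypothesis hd : forall s a th, differentiable (fun th' => pi th' s a) th.

Definition Mx th : 'M[R]_#|S| := \matrix_(i, j)
  ((i == j)%:R - gamma * \sum_a pi th (enum_val j) a * P (enum_val j) a (enum_val i)).

Definition rv (u : S -> A -> R) th : 'rV[R]_#|S| :=
  \row_j \sum_a pi th (enum_val j) a * u (enum_val j) a.

Lemma sum_enum_rank (F : 'I_#|S| -> R) :
  \sum_(i : 'I_#|S|) F i = \sum_(s : S) F (enum_rank s).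
Proof.
rewrite (reindex enum_rank) //.
by case: (@enum_rank_bij S) => g h1 h2; exists g => x _.
Qed.

Lemma mulr_natb (b : bool) (y : R) : y * (b%:R) = if b then y else 0.
Proof. by case: b; rewrite ?mulr1 ?mulr0. Qed.

Lemma Mx_row th (y : 'rV[R]_#|S|) s :
  (y *m Mx th) 0 (enum_rank s) =
  y 0 (enum_rank s) - gamma * \sum_a pi th s a * \sum_s1 P s a s1 * y 0 (enum_rank s1).
Proof.
rewrite mxE.
under eq_bigr do rewrite mxE mulrBr mulr_natb.
rewrite sumrB; congr (_ - _).
  by rewrite -big_mkcond big_pred1_eq.
rewrite enum_rankK sum_enum_rank.
under eq_bigr do rewrite enum_rankK mulrCA mulr_sumr.
rewrite -mulr_sumr; congr (_ * _).
rewrite exchange_big /=; apply: eq_bigr => a _.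
rewrite mulr_sumr; apply: eq_bigr => s1 _.
by rewrite mulrC -mulrA.
Qed.

Lemma Mx_unit th : Mx th \in unitmx.
Proof.
rewrite unitmxE unitfE; apply/negP => /det0P [v nv vM].
have hz := @bell_uniq0 R S A P gamma hP hg (pi th) (hpi th)
   (fun s => v 0 (enum_rank s)).
have : forall s, v 0 (enum_rank s) = 0.
  apply: hz => s; apply/eqP; rewrite -subr_eq0; apply/eqP.
  by rewrite -Mx_row vM mxE.
move=> h0; move/eqP: nv; apply; apply/matrixP => i j.
by rewrite ord1 mxE -(enum_valK j) h0.
Qed.

Definition zx u th s := (rv u th *m invmx (Mx th)) 0 (enum_rank s).

Lemma V_zx u th s : Vfun P gamma (pi th) u s = zx u th s.
Proof.
apply: (@bell_uniq R S A P gamma hP hg (pi th) (hpi th)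
  (fun s => \sum_a pi th s a * u s a)).
  by move=> s'; apply: V_bellman'.
move=> s'; apply/eqP; rewrite -subr_eq; apply/eqP.
rewrite /zx -Mx_row mulmxKV; last exact: Mx_unit.
by rewrite mxE enum_rankK.
Qed.

Lemma diff_Mcst (f : 'rV[R]_d -> R) (c : R) x :
  differentiable f x -> differentiable (fun y => f y * c) x.
Proof. by move=> hf; apply: (differentiableM hf (differentiable_cst c x)). Qed.

Lemma diff_Mx th i j : differentiable (fun y => Mx y i j) th.
Proof.
under eq_fun do rewrite mxE.
apply: (differentiableB (differentiable_cst _ th)).
apply: diff_cstM; apply: diff_sum_seq => a.
by apply: diff_Mcst.
Qed.

Lemma diff_V u s th : differentiable (fun y => Vfun P gamma (pi y) u s) th.
Proof.
under eq_fun do rewrite V_zx /zx mxE.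
apply: diff_sum_seq => i.
under eq_fun do rewrite /invmx Mx_unit !mxE.
apply: differentiableM.
  by apply: diff_sum_seq => a; apply: diff_Mcst.
apply: differentiableM.
  apply: differentiableV; first by apply: diff_det => a b; apply: diff_Mx.
  by rewrite -unitfE -unitmxE Mx_unit.
by apply: diff_cofactor => a b; apply: diff_Mx.
Qed.

End Cramer.

Section DerAlg.
Variables (R : realType) (d : nat).
Local Notation V := 'rV[R]_d.
Implicit Types (f g : V -> R) (x v : V).

Lemma dvb f x v : differentiable f x -> derivable f x v.
Proof. exact: diff_derivable. Qed.

Lemma DD f g x v : differentiable f x -> differentiable g x ->
  'D_v (fun y => f y + g y) x = 'D_v f x + 'D_v g x.
Proof. move=> hf hg; have := deriveD (@dvb f x v hf) (@dvb g x v hg). done. Qed.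

Lemma DM f g x v : differentiable f x -> differentiable g x ->
  'D_v (fun y => f y * g y) x = f x * 'D_v g x + g x * 'D_v f x.
Proof. move=> hf hg; have := deriveM (@dvb f x v hf) (@dvb g x v hg). done. Qed.

Lemma Dcst (c : R) x v : 'D_v (fun _ : V => c) x = 0.
Proof. exact: derive_cst. Qed.

Lemma DcstM (c : R) f x v : differentiable f x ->
  'D_v (fun y => c * f y) x = c * 'D_v f x.
Proof.
move=> hf; rewrite (DM _ (differentiable_cst c x) hf) Dcst mulr0 addr0.
by [].
Qed.

Lemma DMcst (c : R) f x v : differentiable f x ->
  'D_v (fun y => f y * c) x = 'D_v f x * c.
Proof.
move=> hf; rewrite (DM _ hf (differentiable_cst c x)) Dcst mulr0 add0r mulrC.
by [].
Qed.

Lemma Dsum (I : Type) (r : seq I) (f : I -> V -> R) x v :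
  (forall i, differentiable (f i) x) ->
  'D_v (fun y => \sum_(i <- r) f i y) x = \sum_(i <- r) 'D_v (f i) x.
Proof.
move=> hf; elim: r => [|i r IH].
  by under eq_fun do rewrite big_nil; rewrite big_nil Dcst.
under eq_fun do rewrite big_cons.
rewrite big_cons DD ?IH //.
exact: diff_sum_seq.
Qed.

End DerAlg.

Section PG.
Variables (R : realType) (S A : finType) (P : S -> A -> S -> R) (gamma : R).
Hypothesis hP : is_kernel P.
Hypothesis hg : 0 <= gamma < 1.
Variable d : nat.
Variable pi : 'rV[R]_d -> S -> A -> R.
Hypothesis hpi : forall th, is_policy (pi th).
Hypothesis hd : forall s a th, differentiable (fun th' => pi th' s a) th.
Variable rho : S -> R.

Lemma diff_Vrho u th : differentiable (fun y => Vrho P gamma rho (pi y) u) th.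
Proof.
apply: diff_sum_seq => s; apply: diff_cstM.
exact: diff_V.
Qed.

Section At.
Variables (u : S -> A -> R) (th v : 'rV[R]_d).

Let Vf s := fun y => Vfun P gamma (pi y) u s.
Let y s := 'D_v (Vf s) th.
Let Dp s a := 'D_v (fun y => pi y s a) th.
Let g s := \sum_a Qfun P gamma (pi th) u s a * Dp s a.

Lemma y_bellman s :
  y s = g s + gamma * \sum_a pi th s a * \sum_s1 P s a s1 * y s1.
Proof.
have hV : forall s, differentiable (Vf s) th by move=> s'; apply: diff_V.
rewrite /y [Vf s](_ : _ = fun y => (\sum_a pi y s a * u s a) +
    gamma * \sum_a pi y s a * \sum_s1 P s a s1 * Vf s1 y); last first.
  by apply/funext => z; rewrite /Vf V_bellman'.
have d1 : differentiable (fun y => \sum_a pi y s a * u s a) th.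
  by apply: diff_sum_seq => a; apply: diff_Mcst; exact: hd.
have d2 : forall a, differentiable (fun y => \sum_s1 P s a s1 * Vf s1 y) th.
  by move=> a; apply: diff_sum_seq => s1; apply: diff_cstM.
have d3 : differentiable (fun y => \sum_a pi y s a * \sum_s1 P s a s1 * Vf s1 y) th.
  by apply: diff_sum_seq => a; apply: differentiableM; [exact: hd | exact: d2].
rewrite DD //; last by apply: diff_cstM.
have d4 : forall a, differentiable (fun y => pi y s a * \sum_s1 P s a s1 * Vf s1 y) th.
  by move=> a; apply: differentiableM; [exact: hd | exact: d2].
have d5 : forall a, differentiable (fun y => pi y s a * u s a) th.
  by move=> a; apply: diff_Mcst; exact: hd.
rewrite DcstM // !Dsum //.
under eq_bigr do rewrite DMcst //.
rewrite [X in gamma * X](eq_bigr (fun a => pi th s a * \sum_s1 P s a s1 * 'D_v (Vf s1) th +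
   (\sum_s1 P s a s1 * Vf s1 th) * Dp s a)); last first.
  move=> a _; rewrite DM // Dsum //; last by move=> s1; apply: diff_cstM.
  by under eq_bigr do rewrite DcstM //.
rewrite [X in gamma * X]big_split /= mulrDr addrCA [RHS]addrC; congr (_ + _).
rewrite /g; under [RHS]eq_bigr do rewrite Q_bellman // mulrDl.
rewrite big_split /=; congr (_ + _).
  by apply: eq_bigr => a _; rewrite mulrC.
rewrite mulr_sumr; apply: eq_bigr => a _.
by rewrite mulrA.
Qed.

Definition w s0 := \sum_s Lv P gamma (pi th) s0 s * g s.

Lemma w_bellman s0 :
  w s0 = g s0 + gamma * \sum_a pi th s0 a * \sum_s1 P s0 a s1 * w s1.
Proof.
rewrite /w.
under eq_bigr do rewrite Lv_bellman // mulrDl.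
rewrite big_split /=; congr (_ + _).
  under eq_bigr do rewrite if_mull mul1r.
  by rewrite sum_ind.
under eq_bigr do rewrite -mulrA.
rewrite -mulr_sumr; congr (_ * _).
transitivity (\sum_s1 \sum_a \sum_i pi th s0 a * P s0 a s1 * (Lv P gamma (pi th) s1 i * g i)).
  under eq_bigr do rewrite mulr_suml.
  rewrite exchange_big /=; apply: eq_bigr => s1 _.
  under eq_bigr do rewrite -mulrA mulr_suml.
  by rewrite exchange_big.
rewrite exchange_big /=; apply: eq_bigr => a _.
rewrite mulr_sumr; apply: eq_bigr => s1 _.
by rewrite mulr_sumr mulr_sumr; apply: eq_bigr => i _; rewrite !mulrA.
Qed.

Lemma y_w s : y s = w s.
Proof.
apply: (@bell_uniq R S A P gamma hP hg (pi th) (hpi th) g) => s'.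
  exact: y_bellman.
exact: w_bellman.
Qed.

Lemma PG :
  'D_v (fun y => Vrho P gamma rho (pi y) u) th =
  \sum_s (dvisit P gamma rho (pi th) s / (1 - gamma) *
      \sum_a Qfun P gamma (pi th) u s a * 'D_v (fun th => pi th s a) th).
Proof.
rewrite /Vrho Dsum; last first.
  by move=> s; apply: diff_cstM; apply: diff_V.
rewrite (eq_bigr (fun s => rho s * w s)); last first.
  move=> s _; rewrite DcstM; last exact: diff_V.
  by rewrite -(y_w s).
rewrite /w.
under eq_bigr do rewrite mulr_sumr.
rewrite exchange_big /=; apply: eq_bigr => s _.
rewrite /dvisit [_ / (1 - gamma)]mulrC mulrA mulVf ?mul1r; last first.
  by case/andP: hg => _ g1; rewrite subr_eq0 eq_sym lt_eqF.
rewrite mulr_suml; apply: eq_bigr => s0 _.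
by rewrite mulrA.
Qed.

End At.
End PG.

Section Hmin.
Variable R : realType.

Lemma hmin_ineq (x0 t : R) :
  `|2 * Num.min x0 0 * t - (Num.min (x0 + t) 0 ^+ 2 - Num.min x0 0 ^+ 2)| <= t ^+ 2.
Proof.
rewrite ler_norml.
case: (leP x0 0) => h0; case: (leP (x0 + t) 0) => h1; apply/andP; split; nra.
Qed.
End Hmin.
Section Hmin2.
Variable R : realType.
Definition hmin (x : R) := Num.min x 0 ^+ 2.

Lemma hmin_cvg (x0 : R) :
  (fun h : R => h^-1 *: ((hmin \o shift x0) (h *: 1) - hmin x0)) @ 0^' -->
  2 * Num.min x0 0.
Proof.
apply/cvgrPdist_le => e e0.
near=> t.
have tn0 : t != 0 by near: t; exact: nbhs_dnbhs_neq.
have te : `|t| <= e by near: t; exact: dnbhs0_le.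
rewrite /= /hmin [t *: 1]mulr1 [t + x0]addrC.
have -> : 2 * Num.min x0 0 = t^-1 * (2 * Num.min x0 0 * t).
  by field.
rewrite [_ *: _]/(_ * _) -mulrBr normrM normfV.
apply: le_trans te.
rewrite ler_pdivrMl ?normr_gt0 //.
apply: le_trans (hmin_ineq x0 t) _.
by rewrite -normrM -expr2 ger0_norm ?sqr_ge0.
Unshelve. all: by end_near.
Qed.

Lemma hmin_is_derive (x0 : R) : is_derive x0 1 hmin (2 * Num.min x0 0).
Proof.
apply: DeriveDef; first by apply/cvg_ex; exists (2 * Num.min x0 0); exact: hmin_cvg.
rewrite /derive; apply/cvg_lim; first exact: Rhausdorff. exact: hmin_cvg.
Qed.

Lemma hmin_diff (x0 : R) : differentiable hmin x0.
Proof. apply/derivable1_diffP; exact: (@ex_derive _ _ _ _ _ _ _ (hmin_is_derive x0)). Qed.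

Variable d : nat.
Lemma D_hmin (f : 'rV[R]_d -> R) x v : differentiable f x ->
  differentiable (fun y => hmin (f y)) x /\
  'D_v (fun y => hmin (f y)) x = 2 * Num.min (f x) 0 * 'D_v f x.
Proof.
move=> hf.
have dc : differentiable (hmin \o f) x by apply: differentiable_comp => //; exact: hmin_diff.
split; first exact: dc.
change ('D_v (hmin \o f) x = 2 * Num.min (f x) 0 * 'D_v f x).
rewrite deriveE // diff_comp //; last exact: hmin_diff.
rewrite /= diff1E; last exact: hmin_diff.
rewrite derive1E (@derive_val _ _ _ _ _ _ _ (hmin_is_derive (f x))) -deriveE //.
by rewrite [_ *: _]/(_ * _) mulrC.
Qed.
End Hmin2.

Section Lin.
Variables (R : realType) (S A : finType) (P : S -> A -> S -> R) (gamma : R).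
Hypothesis hP : is_kernel P.
Hypothesis hg : 0 <= gamma < 1.
Variable pi : S -> A -> R.
Hypothesis hpi : is_policy pi.

Lemma swap3 (X Y Z : finType) (f : X -> Y -> Z -> R) :
  \sum_x \sum_y \sum_z f x y z = \sum_z \sum_x \sum_y f x y z.
Proof.
under eq_bigr do rewrite exchange_big.
by rewrite exchange_big.
Qed.

Lemma G_add (a b : nat -> R) : bnd a -> bnd b ->
  rseries (fun t => gamma ^+ t * (a t + b t)) =
  rseries (fun t => gamma ^+ t * a t) + rseries (fun t => gamma ^+ t * b t).
Proof.
move=> [Ba ha] [Bb hb]; rewrite /rseries.
rewrite (_ : (fun t => gamma ^+ t * (a t + b t)) =
   (fun t => gamma ^+ t * a t) + (fun t => gamma ^+ t * b t)); last first.
  by apply/funext => t /=; rewrite mulrDr.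
apply: lim_seriesD; [exact: (cvg_geo hg ha) | exact: (cvg_geo hg hb)].
Qed.

Lemma Q_lin (I : finType) (u1 : S -> A -> R) (k : I -> R) (U : I -> S -> A -> R) s a :
  Qfun P gamma pi (fun s a => u1 s a + \sum_i k i * U i s a) s a =
  Qfun P gamma pi u1 s a + \sum_i k i * Qfun P gamma pi (U i) s a.
Proof.
rewrite !Qfun_eQ.
rewrite (_ : (fun t => gamma ^+ t * eQ P pi (fun s a => u1 s a + \sum_i k i * U i s a) s a t) =
  (fun t => gamma ^+ t * (eQ P pi u1 s a t + \sum_i k i * eQ P pi (U i) s a t))); last first.
  apply/funext => t; congr (_ * _); rewrite /eQ.
  under eq_bigr do under eq_bigr do rewrite mulrDr mulr_sumr.
  under eq_bigr do rewrite big_split /=.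
  rewrite big_split /=; congr (_ + _).
  under eq_bigr do rewrite exchange_big /=.
  rewrite exchange_big /=; apply: eq_bigr => i _.
  rewrite mulr_sumr; apply: eq_bigr => s' _.
  by rewrite mulr_sumr; apply: eq_bigr => a' _; rewrite mulrCA.
rewrite G_add; first last.
- by apply: bnd_fin => i; apply: bnd_eQ.
- exact: bnd_eQ.
congr (_ + _).
by rewrite G_sum // => i; apply: bnd_eQ.
Qed.

Lemma Vrho_lin (rho : S -> R) (I : finType) (u1 : S -> A -> R) (k : I -> R) (U : I -> S -> A -> R) :
  Vrho P gamma rho pi (fun s a => u1 s a + \sum_i k i * U i s a) =
  Vrho P gamma rho pi u1 + \sum_i k i * Vrho P gamma rho pi (U i).
Proof.
rewrite /Vrho /Vfun.
under eq_bigr do under eq_bigr do rewrite Q_lin mulrDr.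
under eq_bigr do rewrite big_split mulrDr /=.
rewrite big_split /=; congr (_ + _).
transitivity (\sum_s \sum_a \sum_i k i * (rho s * (pi s a * Qfun P gamma pi (U i) s a))).
  apply: eq_bigr => s _; rewrite mulr_sumr; apply: eq_bigr => a _.
  rewrite mulr_sumr mulr_sumr; apply: eq_bigr => i _; ring.
rewrite swap3; apply: eq_bigr => i _.
rewrite mulr_sumr; apply: eq_bigr => s _.
by rewrite mulr_sumr mulr_sumr.
Qed.

End Lin.

Section Extra.
Variables (R : realType) (d : nat).
Local Notation V := 'rV[R]_d.
Implicit Types (f g : V -> R) (x v : V).

Lemma DN f x v : differentiable f x ->
  'D_v (fun y => - f y) x = - 'D_v f x.
Proof. move=> hf; have := deriveN (@dvb R d f x v hf). done. Qed.

Lemma diffN' f x : differentiable f x -> differentiable (fun y => - f y) x.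
Proof. move=> hf; have := differentiableN hf. done. Qed.

Lemma diffBc f (c : R) x : differentiable f x -> differentiable (fun y => f y - c) x.
Proof. move=> hf; have := differentiableB hf (differentiable_cst c x). done. Qed.

Lemma diffDc f (c : R) x : differentiable f x -> differentiable (fun y => f y + c) x.
Proof. move=> hf; have := differentiableD hf (differentiable_cst c x). done. Qed.

Lemma DBc f (c : R) x v : differentiable f x ->
  'D_v (fun y => f y - c) x = 'D_v f x.
Proof.
move=> hf; rewrite (DD (g := fun _ => - c)) //; try exact: differentiable_cst.
by rewrite Dcst addr0.
Qed.

Lemma DDc f (c : R) x v : differentiable f x ->
  'D_v (fun y => f y + c) x = 'D_v f x.
Proof.
move=> hf; rewrite (DD (g := fun _ => c)) //; try exact: differentiable_cst.
by rewrite Dcst addr0.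
Qed.
End Extra.

Unset Implicit Arguments.
Local Close Scope classical_set_scope.

Theorem proposition1 (R : realType) (S A : finType) (m d : nat)
  (P : S -> A -> S -> R) (rho : S -> R) (gamma : R)
  (r : S -> A -> R) (c : 'I_m -> S -> A -> R) (b : 'I_m -> R)
  (lam : 'I_m -> R) (beta : R)
  (pi : 'rV[R]_d -> S -> A -> R) (theta : 'rV[R]_d) :
  is_kernel P -> is_distr rho -> 0 <= gamma < 1 ->
  (forall s a, 0 <= r s a <= 1) ->
  (forall i s a, 0 <= c i s a <= 1) ->
  (forall i, 0 <= b i) ->
  0 < beta ->
  (forall th, is_policy (pi th)) ->
  (forall s a th, differentiable (fun th' => pi th' s a) th) ->
  differentiable (fun th => augLag P gamma rho r c b beta lam (pi th)) theta /\
  forall v : 'rV[R]_d,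
    'D_v (fun th => augLag P gamma rho r c b beta lam (pi th)) theta =
    \sum_(s : S) (dvisit P gamma rho (pi theta) s / (1 - gamma) *
      \sum_(a : A) Qfun P gamma (pi theta)
                     (Gamma P gamma rho r c b beta lam (pi theta)) s a *
                   'D_v (fun th => pi th s a) theta).
Proof.
move=> hP hrho hg hr hc hb hbeta hpi hd.
pose fi i := fun y => Vrho P gamma rho (pi y) (c i) - b i - lam i / beta.
have dVr : forall u, differentiable (fun y => Vrho P gamma rho (pi y) u) theta.
  by move=> u; apply: diff_Vrho.
have dfi : forall i, differentiable (fi i) theta.
  by move=> i; apply: diffBc; apply: diffBc; apply: dVr.
have dterm : forall i, differentiable
    (fun y => - hmin (fi i y) + lam i ^+ 2 / beta ^+ 2) theta.
  by move=> i; apply: diffDc; apply: diffN'; case: (D_hmin 0 (dfi i)).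
have eqF : (fun th => augLag P gamma rho r c b beta lam (pi th)) =
    (fun y => Vrho P gamma rho (pi y) r +
       beta / 2 * \sum_(i <- index_enum 'I_m) (- hmin (fi i y) + lam i ^+ 2 / beta ^+ 2)).
  by [].
rewrite eqF; split.
  apply: differentiableD; first exact: dVr.
  by apply: diff_cstM; apply: diff_sum_seq.
move=> v.
rewrite -PG //.
pose mn i := Num.min (fi i theta) 0.
have eqG : Gamma P gamma rho r c b beta lam (pi theta) =
   (fun s a => r s a + \sum_i (- (beta * mn i)) * c i s a).
  apply/funext => s; apply/funext => a; rewrite /Gamma mulr_sumr -sumrN.
  congr (_ + _); apply: eq_bigr => i _; rewrite /mn /fi; ring.
rewrite eqG.
under [in RHS]eq_fun do rewrite Vrho_lin //.
rewrite DD //; last first.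
  by apply: diff_sum_seq => i; apply: diff_cstM.
rewrite DD //; last first.
  by apply: diff_cstM; apply: diff_sum_seq.
congr (_ + _).
rewrite DcstM; last by apply: diff_sum_seq.
rewrite !Dsum //; last by move=> i; apply: diff_cstM.
rewrite mulr_sumr; apply: eq_bigr => i _.
rewrite DDc; last by apply: diffN'; case: (D_hmin 0 (dfi i)).
rewrite DN; last by case: (D_hmin 0 (dfi i)).
case: (D_hmin v (dfi i)) => _ ->.
rewrite DcstM // /fi DBc; last by apply: diffBc.
rewrite DBc // /mn /fi.
by field.
Qed.
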